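(* Let $n\ge4$ be even. Let the additive group $\Lambda=\mathbb R^n$ act on $\mathbb R^{E_n}$ by $\lambda\cdot y=(\lambda_i+\lambda_j+y_{\{i,j\}})_{\{i,j\}\in E_n}$ for $\lambda\in\Lambda$, $y\in\mathbb R^{E_n}$. Then every $\Lambda$-invariant subset of $\mathbb R^{E_n}$ is fiber-invariant for the linear map $f:\mathbb R^{E_n}\to\mathbb R^{\mathcal M_n}$, $f(y)=(y_M)_{M\in\mathcal M_n}$, where $y_M=\sum_{e\in M}y_e$.
   Context: $E_n$ is the set of edges of the complete graph on $[n]=\{1,\dots,n\}$ and $\mathcal M_n$ is the set of its perfect matchings. For a map $f:X\to Y$, $D\subseteq X$ is fiber-invariant for $f$ if for each $y\in f(D)$ the fiber $f^{-1}(y)$ is contained in $D$. *)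

(* Defs.v *)
From mathcomp Require Import all_boot all_order all_algebra.
From mathcomp Require Import reals.
Set Implicit Arguments. Unset Strict Implicit. Unset Printing Implicit Defensive.
Import Order.TTheory GRing.Theory Num.Theory.
Local Open Scope ring_scope.

Definition edge (n : nat) := {e : {set 'I_n} | #|e| == 2%N}.

Definition perfect_matching (n : nat) (M : {set edge n}) : bool :=
  [forall v : 'I_n, #|[set e in M | v \in val e]| == 1%N].

Definition act (R : realType) (n : nat) (lam : 'I_n -> R) (y : edge n -> R)
  : edge n -> R :=
  fun e => (\sum_(i in val e) lam i) + y e.

Definition Lambda_invariant (R : realType) (n : nat) (D : (edge n -> R) -> Prop)
  : Prop := forall (lam : 'I_n -> R) (y : edge n -> R), D y -> D (act lam y).

Definition yM (R : realType) (n : nat) (y : edge n -> R) (M : {set edge n}) : R :=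
  \sum_(e in M) y e.

Definition f_match (R : realType) (n : nat) (y : edge n -> R)
  : {M : {set edge n} | perfect_matching M} -> R :=
  fun M => yM y (val M).

Definition fiber_invariant (X Y : Type) (g : X -> Y) (D : X -> Prop) : Prop :=
  forall z : Y, (exists2 x, D x & g x = z) -> forall x', g x' = z -> D x'.

(* Main.v *)
Require Import Defs.
From mathcomp Require Import all_boot all_order all_algebra.
From mathcomp Require Import reals.
From mathcomp Require Import lra zify.
From Stdlib Require Import FunctionalExtensionality.
Set Implicit Arguments. Unset Strict Implicit. Unset Printing Implicit Defensive.
Import Order.TTheory GRing.Theory Num.Theory.
Local Open Scope ring_scope.

Section S.
Variables (R : realType) (n : nat).
Variable d : edge n -> R.

Definition W (s : {set 'I_n}) : R := oapp d 0 (insub s).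
Definition w (i j : 'I_n) := W [set i; j].
Lemma wC i j : w i j = w j i. Proof. by rewrite /w setUC. Qed.

Definition fpf (p : 'I_n -> 'I_n) := (forall v, p (p v) = v) /\ (forall v, p v != v).

Definition Mp p : {set edge n} := [set e : edge n | [exists v, val e == [set v; p v]]].

Lemma Mp_at p : fpf p -> forall v, exists e : edge n,
  [set e0 in Mp p | v \in val e0] = [set e] /\ val e = [set v; p v].
Proof.
move=> [Hi Hf] v.
have E : #|[set v; p v]| == 2%N by rewrite cards2 [v == _]eq_sym (Hf v).
exists (exist (fun s : {set 'I_n} => is_true (#|s| == 2%N)) _ E); split => //.
apply/setP => e0; rewrite !inE; apply/andP/eqP.
- move=> [/existsP [u /eqP Hu]] Hv; apply: val_inj => /=.
  move: Hv; rewrite Hu !inE => /orP [/eqP ->|/eqP ->] //.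
  by rewrite Hi setUC.
- move=> ->; split; last by rewrite /= !inE eqxx.
  by apply/existsP; exists v.
Qed.

Lemma Mp_perfect p : fpf p -> perfect_matching (Mp p).
Proof.
move=> Hp; apply/forallP => v; have [e [-> _]] := Mp_at Hp v.
by rewrite cards1.
Qed.

Lemma sumMp p : fpf p -> \sum_v W [set v; p v] = yM d (Mp p) *+ 2.
Proof.
move=> Hp.
transitivity (\sum_v \sum_(e0 in [set e0 in Mp p | v \in val e0]) d e0).
  apply: eq_bigr => v _; have [e [-> He]] := Mp_at Hp v.
  by rewrite big_set1 -He /W valK.
under eq_bigr do rewrite big_mkcond.
rewrite exchange_big /yM -sumrMnl [RHS]big_mkcond; apply: eq_bigr => e _.
under eq_bigr do rewrite inE.
case: (e \in Mp p) => /=; last by rewrite big1.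
rewrite -big_mkcond sumr_const.
have H2 : #|val e| = 2%N by case: e => s /= /eqP.
by congr (_ *+ _).
Qed.


Definition sw (p : 'I_n -> 'I_n) x y v :=
  if v == x then y else if v == y then x else if v == p x then p y
  else if v == p y then p x else p v.

Section Sw.
Variables (p : 'I_n -> 'I_n) (x y : 'I_n).
Hypothesis Hp : fpf p.
Hypothesis xy : x != y.
Hypothesis ypx : y != p x.

Let Hi := proj1 Hp.
Let Hf := proj2 Hp.
Lemma p_inj : injective p. Proof. exact: (can_inj Hi). Qed.
Let xpx : x != p x. Proof. by rewrite eq_sym Hf. Qed.
Let ypy : y != p y. Proof. by rewrite eq_sym Hf. Qed.
Let xpy : x != p y. Proof. by apply/eqP => E; move/eqP: ypx; rewrite E Hi. Qed.
Let pxpy : p x != p y. Proof. by rewrite (inj_eq p_inj). Qed.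

Lemma sw_x : sw p x y x = y. Proof. by rewrite /sw eqxx. Qed.
Lemma sw_y : sw p x y y = x. Proof. by rewrite /sw eqxx eq_sym (negbTE xy). Qed.
Lemma sw_px : sw p x y (p x) = p y.
Proof. by rewrite /sw eqxx eq_sym (negbTE xpx) eq_sym (negbTE ypx). Qed.
Lemma sw_py : sw p x y (p y) = p x.
Proof. by rewrite /sw eqxx eq_sym (negbTE xpy) eq_sym (negbTE ypy) eq_sym (negbTE pxpy). Qed.
Lemma sw_o v : v != x -> v != y -> v != p x -> v != p y -> sw p x y v = p v.
Proof. by rewrite /sw => /negbTE -> /negbTE -> /negbTE -> /negbTE ->. Qed.

Lemma sw_fpf : fpf (sw p x y).
Proof.
split => v.
  have [->|vx] := eqVneq v x; first by rewrite sw_x sw_y.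
  have [->|vy] := eqVneq v y; first by rewrite sw_y sw_x.
  have [->|vpx] := eqVneq v (p x); first by rewrite sw_px sw_py.
  have [->|vpy] := eqVneq v (p y); first by rewrite sw_py sw_px.
  rewrite sw_o // sw_o ?Hi //; apply/eqP => E.
  - by move: vpx; rewrite -E Hi eqxx.
  - by move: vpy; rewrite -E Hi eqxx.
  - by move: vx; rewrite -(Hi v) E Hi eqxx.
  - by move: vy; rewrite -(Hi v) E Hi eqxx.
have [->|vx] := eqVneq v x; first by rewrite sw_x eq_sym.
have [->|vy] := eqVneq v y; first by rewrite sw_y.
have [->|vpx] := eqVneq v (p x); first by rewrite sw_px eq_sym.
have [->|vpy] := eqVneq v (p y); first by rewrite sw_py.
by rewrite sw_o.
Qed.

Hypothesis Hd : forall M : {set edge n}, perfect_matching M -> yM d M = 0.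

Lemma K : w x (p x) + w y (p y) = w x y + w (p x) (p y).
Proof.
have H1 := sumMp Hp; have H2 := sumMp sw_fpf.
rewrite Hd in H1; last exact: Mp_perfect.
rewrite Hd in H2; last exact: (Mp_perfect sw_fpf).
have : \sum_v (W [set v; p v] - W [set v; sw p x y v]) = 0.
  by rewrite sumrB H1 H2 subrr.
rewrite (bigD1 x) //= (bigD1 y) /=; last by rewrite eq_sym.
rewrite (bigD1 (p x)) /=; last by rewrite eq_sym xpx eq_sym.
rewrite (bigD1 (p y)) /=; last by rewrite eq_sym xpy eq_sym ypy eq_sym pxpy.
rewrite big1; last first.
  by move=> v /andP [/andP [/andP [z a] b] c]; rewrite sw_o ?subrr.
move=> H; rewrite sw_x sw_y sw_px sw_py Hi in H.
rewrite /w; move: H; rewrite Hi [[set y; x]]setUC [[set p x; x]]setUC [[set p y; y]]setUC [[set p y; p x]]setUC => H.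
lra.
Qed.
End Sw.

Lemma p0_lt (hn : ~~ odd n) (v : 'I_n) : ((if odd v then v.-1 else v.+1) < n)%N.
Proof.
case: v => v /= vn; case: ifP => ov.
  by apply: leq_ltn_trans vn; apply: leq_pred.
rewrite ltn_neqAle vn andbT; apply/eqP => E.
by move: hn; rewrite -E /= ov.
Qed.

Lemma exists_fpf : ~~ odd n -> exists p, fpf p.
Proof.
move=> hn; exists (fun v => Ordinal (p0_lt hn v)); split => v.
  apply: val_inj => /=; case: v => v /= _.
  case ov: (odd v) => /=.
    by case: v ov => //= v ov; rewrite (negbTE ov).
  by rewrite ov.
apply/eqP => /(congr1 val) /=; case: v => v /= _.
case: ifP => ov; last by move/eqP; rewrite -[X in _ == X]addn0 -addn1 eqn_add2l.
by case: v ov => //= v _ /eqP; rewrite -[X in X == _]addn0 -addn1 eqn_add2l.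
Qed.

Lemma fpf_ab (a b c e : 'I_n) : ~~ odd n -> a != b -> a != c -> a != e ->
  b != c -> b != e -> c != e -> exists p, [/\ fpf p, p a = b & p c = e].
Proof.
move=> hn ab ac ae bc be ce.
have [p0 Hp0] := exists_fpf hn.
have [p1 [Hp1 p1a]] : exists p1, fpf p1 /\ p1 a = b.
  have [E|E] := eqVneq (p0 a) b; first by exists p0.
  exists (sw p0 a b); split; [apply: sw_fpf => //; by rewrite eq_sym|].
  by rewrite sw_x.
have p1b : p1 b = a by rewrite -p1a (proj1 Hp1).
have [E|E] := eqVneq (p1 c) e; first by exists p1.
exists (sw p1 c e); split => //; [apply: sw_fpf => //; by rewrite eq_sym| |by rewrite sw_x].
rewrite sw_o // 1?eq_sym //.
- by apply/eqP => H; move: bc; rewrite -(proj1 Hp1 c) H p1a eqxx.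
- by apply/eqP => H; move: be; rewrite -(proj1 Hp1 e) H p1a eqxx.
Qed.

Lemma cyc (a b c e : 'I_n) :
  (forall M : {set edge n}, perfect_matching M -> yM d M = 0) -> ~~ odd n ->
  a != b -> a != c -> a != e -> b != c -> b != e -> c != e ->
  w a b + w c e = w a c + w b e.
Proof.
move=> Hd hn ab ac ae bc be ce.
have [p [Hp pa pc]] := fpf_ab hn ab ac ae bc be ce.
have := K Hp ac; rewrite pa pc; apply => //; by rewrite eq_sym.
Qed.
End S.

Lemma third (n : nat) (i j : 'I_n) : (2 < n)%N -> exists c : 'I_n, c != i /\ c != j.
Proof.
move=> n2.
have : (0 < #|~: [set i; j]|)%N.
  have := cardsC [set i; j]; rewrite card_ord cards2 => E.
  case: (i != j) E => /= E; lia.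
rewrite card_gt0 => /set0Pn [c]; rewrite !inE negb_or => /andP [a b].
by exists c.
Qed.

Lemma lam_ex (R : realType) (n : nat) (w : 'I_n -> 'I_n -> R) : (2 < n)%N ->
  (forall i j, w i j = w j i) ->
  (forall a b c e : 'I_n, a != b -> a != c -> a != e -> b != c -> b != e -> c != e ->
     w a b + w c e = w a c + w b e) ->
  exists lam : 'I_n -> R, forall i j, i != j -> lam i + lam j = w i j.
Proof.
move=> n2 wC cyc.
pose Q i j c := w i j + w i c - w j c.
have L : forall i j c c' : 'I_n, j != i -> c != i -> c != j -> c' != i -> c' != j ->
    Q i j c = Q i j c'.
  move=> i j c c' ji ci cj c'i c'j.
  have [->|cc'] := eqVneq c c'; first by [].
  have : w i c + w c' j = w i c' + w c j by apply: cyc => //; rewrite eq_sym.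
  rewrite /Q.
  rewrite (wC c j) (wC c' j); lra.
have Sy : forall i j c, Q i j c = Q i c j.
  by move=> i j c; rewrite /Q (wC j c); lra.
have Cl : forall i j c j' c' : 'I_n, j != i -> c != i -> c != j -> j' != i -> c' != i -> c' != j' ->
    Q i j c = Q i j' c'.
  move=> i j c j' c' ji ci cj j'i c'i c'j'.
  have [E|jj'] := eqVneq j j'; first by subst j'; apply: (L i j c c').
  transitivity (Q i j j'); first by apply: (L i j c j'); rewrite // eq_sym.
  by rewrite Sy; apply: (L i j' j c'); rewrite // eq_sym.
pose lam i := if [pick jc : 'I_n * 'I_n | (jc.1 != i) && (jc.2 != i) && (jc.2 != jc.1)]
   is Some jc then Q i jc.1 jc.2 / 2%:R else 0.
have Hl : forall i j c : 'I_n, j != i -> c != i -> c != j -> lam i = Q i j c / 2%:R.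
  move=> i j c ji ci cj; rewrite /lam; case: pickP => [[j' c'] /= /andP [/andP [a b] e]|].
    by rewrite (Cl i j' c' j c).
  by move/(_ (j, c)) => /=; rewrite ji ci cj.
exists lam => i j ij.
have [c [ci cj]] := third i j n2.
have h1 : lam i = (w i j + w i c - w j c) / 2%:R by apply: Hl; rewrite // eq_sym.
have h2 : lam j = (w j i + w j c - w i c) / 2%:R by apply: Hl.
rewrite h1 h2 (wC j i); lra.
Qed.

Theorem theorem4p6 (R : realType) (n : nat) :
  (4 <= n)%N -> ~~ odd n ->
  forall D : (edge n -> R) -> Prop,
    Lambda_invariant D -> fiber_invariant (@f_match R n) D.
Proof.
move=> n4 nev D HD z [x Dx fx] x' fx'.
pose dd e := x' e - x e.
have Hd : forall M : {set edge n}, perfect_matching M -> yM dd M = 0.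
  move=> M HM.
  have := congr1 (fun g => g (exist _ M HM)) fx'; rewrite -fx /f_match /= => E.
  by rewrite /yM /dd sumrB -/(yM x' M) -/(yM x M) E subrr.
have n2 : (2 < n)%N by apply: leq_trans n4.
have [lam Hlam] := lam_ex n2 (@wC R n dd)
  (fun a b c e => @cyc R n dd a b c e Hd nev).
suff -> : x' = act lam x by apply: HD.
apply: functional_extensionality => e; rewrite /act.
case: e => s hs /=.
have [i [j [ij Hs]]] := cards2P _ hs.
have E : \sum_(k in s) lam k = lam i + lam j.
  rewrite Hs big_setU1 ?big_set1 // ?inE; exact: ij.
rewrite E Hlam; last exact: ij.
rewrite /w -Hs /W.
have -> : insub s = Some (exist (fun e : {set 'I_n} => #|e| == 2%N) s hs) :> option (edge n).
  exact: (valK (exist (fun e : {set 'I_n} => #|e| == 2%N) s hs)).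
by rewrite /= /dd subrK.
Qed.
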